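(* Let $(M,\pi)$ be a partial $H$-module with standard dilation $((\overline M,T_\pi),\varphi)$. (i) For any proper dilation $((N,T),\theta)$ of $M$, there is a unique surjective $H$-linear map $\Phi:N\to\overline M$ such that $T_\pi\circ\Phi=\Phi\circ T$ and $\Phi\circ\theta=\varphi$. (ii) The map $\Phi$ is injective (hence bijective) if and only if the dilation $((N,T),\theta)$ is minimal.
   Context: Throughout, $k$ is a field and $H$ is a Hopf algebra over $k$ with bijective antipode $S$ and Sweedler notation $\Delta(h)=h_{(1)}\otimes h_{(2)}$. A partial $H$-module is a vector space $M$ with linear $\pi:H\to\mathrm{End}_k(M)$ satisfying, for all $h,k\in H$: - $\pi(1_H)=\mathrm{id}$; - $\pi(h)\pi(k_{(1)})\pi(S(k_{(2)}))=\pi(hk_{(1)})\pi(S(k_{(2)}))$; - $\pi(h_{(1)})\pi(S(h_{(2)}))\pi(k)=\pi(h_{(1)})\pi(S(h_{(2)})k)$; - $\pi(h)\pi(S(k_{(1)}))\pi(k_{(2)})=\pi(hS(k_{(1)}))\pi(k_{(2)})$; - $\pi(S(h_{(1)}))\pi(h_{(2)})\pi(k)=\pi(S(h_{(1)}))\pi(h_{(2)}k)$. Morphisms are linear maps commuting with all $\pi(h)$. For a left $H$-module $N$ (action $\triangleright$) and linear projection $T$, put $T_h(x)=h_{(1)}\triangleright T(S(h_{(2)})\triangleright x)$. $T$ satisfies the c-condition if $T_h\circ T=T\circ T_h$ for all $h$; then $T(N)$ is a partial $H$-module via $\pi_T(h)(x)=T(h\triangleright x)$. A dilation of $(M,\pi)$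 is $((N,T),\theta)$ with $N$ a left $H$-module, $T$ a projection on $N$ satisfying the c-condition, and $\theta:M\to T(N)$ an isomorphism of partial $H$-modules onto $(T(N),\pi_T)$. It is proper if $N$ is generated as an $H$-module by $\theta(M)$. It is minimal if $N$ contains no nonzero $H$-submodule annihilated by $T$. Standard dilation: $\operatorname{Hom}_k(H,M)$ is a left $H$-module via $(h\triangleright f)(k)=f(kh)$. Set $\varphi(m)(h)=\pi(h)(m)$, $\overline M=H\triangleright\varphi(M)\subseteq\operatorname{Hom}_k(H,M)$, and $T_\pi(f)=\varphi(f(1_H))$. *)

(* Defs.v *)
From HB Require Import structures.
From mathcomp Require Import all_boot all_order all_algebra.
Set Implicit Arguments. Unset Strict Implicit. Unset Printing Implicit Defensive.
Import GRing.Theory.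
Local Open Scope ring_scope.

(* The coproduct Delta(h) is represented by a finite list of pairs
   [(h_(1)^i, h_(2)^i)] with Delta(h) = sum_i h_(1)^i (x) h_(2)^i; two lists
   represent the same tensor iff all k-bilinear forms agree on them (bilinear
   forms separate points of H (x) H over a field).  Sweedler sums are sums
   over this list. *)

Section Defs.
Variable k : fieldType.

Definition klinear (U V : lmodType k) (f : U -> V) : Prop :=
  forall (c : k) (x y : U), f (c *: x + y) = c *: f x + f y.

Definition kform (U : lmodType k) (f : U -> k) : Prop :=
  forall (c : k) (x y : U), f (c *: x + y) = c * f x + f y.

Definition bilinear_form (U : lmodType k) (f : U -> U -> k) : Prop :=
  (forall a, kform (f a)) /\ (forall b, kform (fun a => f a b)).

Definition trilinear_form (U : lmodType k) (f : U -> U -> U -> k) : Prop :=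
  (forall a b, kform (f a b)) /\ (forall a c, kform (fun b => f a b c)) /\
  (forall b c, kform (fun a => f a b c)).

Definition teq2 (U : lmodType k) (s t : seq (U * U)) : Prop :=
  forall f : U -> U -> k, bilinear_form f ->
    \sum_(p <- s) f p.1 p.2 = \sum_(p <- t) f p.1 p.2.

Record hopf (H : algType k) := Hopf {
  cop : H -> seq (H * H);
  eps : H -> k;
  antip : H -> H;
  cop_lin : forall (c : k) (x y : H),
    teq2 (cop (c *: x + y)) ([seq (c *: p.1, p.2) | p <- cop x] ++ cop y);
  cop_mul : forall x y : H,
    teq2 (cop (x * y)) [seq (p.1 * q.1, p.2 * q.2) | p <- cop x, q <- cop y];
  cop_one : teq2 (cop 1) [:: (1, 1)];
  coassoc : forall (h : H) (g : H -> H -> H -> k), trilinear_form g ->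
    \sum_(p <- cop h) \sum_(q <- cop p.1) g q.1 q.2 p.2 =
    \sum_(p <- cop h) \sum_(q <- cop p.2) g p.1 q.1 q.2;
  eps_lin : kform eps;
  eps_mul : forall x y : H, eps (x * y) = eps x * eps y;
  eps_one : eps 1 = 1;
  counitl : forall h : H, \sum_(p <- cop h) eps p.1 *: p.2 = h;
  counitr : forall h : H, \sum_(p <- cop h) eps p.2 *: p.1 = h;
  antip_lin : klinear antip;
  antipl : forall h : H, \sum_(p <- cop h) antip p.1 * p.2 = eps h *: 1;
  antipr : forall h : H, \sum_(p <- cop h) p.1 * antip p.2 = eps h *: 1;
  antip_bij : bijective antip
}.

Variables (H : algType k) (HH : hopf H).
Local Notation D := (cop HH).
Local Notation S := (antip HH).

Record partial_module (M : lmodType k) (pi : H -> M -> M) : Prop := {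
  pm_linH : forall m : M, klinear (fun h => pi h m);
  pm_linM : forall h : H, klinear (pi h);
  pm_one : forall m : M, pi 1 m = m;
  pm_ax1 : forall (h g : H) (m : M),
    \sum_(p <- D g) pi h (pi p.1 (pi (S p.2) m)) =
    \sum_(p <- D g) pi (h * p.1) (pi (S p.2) m);
  pm_ax2 : forall (h g : H) (m : M),
    \sum_(p <- D h) pi p.1 (pi (S p.2) (pi g m)) =
    \sum_(p <- D h) pi p.1 (pi (S p.2 * g) m);
  pm_ax3 : forall (h g : H) (m : M),
    \sum_(p <- D g) pi h (pi (S p.1) (pi p.2 m)) =
    \sum_(p <- D g) pi (h * S p.1) (pi p.2 m);
  pm_ax4 : forall (h g : H) (m : M),
    \sum_(p <- D h) pi (S p.1) (pi p.2 (pi g m)) =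
    \sum_(p <- D h) pi (S p.1) (pi (p.2 * g) m)
}.

Record left_module (N : lmodType k) (act : H -> N -> N) : Prop := {
  lm_linH : forall x : N, klinear (fun h => act h x);
  lm_linN : forall h : H, klinear (act h);
  lm_one : forall x : N, act 1 x = x;
  lm_mul : forall (h g : H) (x : N), act (h * g) x = act h (act g x)
}.

Definition Tconj (N : lmodType k) (act : H -> N -> N) (T : N -> N) (h : H) (x : N) : N :=
  \sum_(p <- D h) act p.1 (T (act (S p.2) x)).

Record dilation (M : lmodType k) (pi : H -> M -> M)
    (N : lmodType k) (act : H -> N -> N) (T : N -> N) (theta : M -> N) : Prop := {
  dil_module : left_module act;
  dil_Tlin : klinear T;
  dil_Tproj : forall x : N, T (T x) = T x;
  dil_ccond : forall (h : H) (x : N), Tconj act T h (T x) = T (Tconj act T h x);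
  dil_thlin : klinear theta;
  dil_thinj : injective theta;
  dil_thin : forall m : M, T (theta m) = theta m;
  dil_thonto : forall x : N, exists m : M, theta m = T x;
  dil_thmor : forall (h : H) (m : M), theta (pi h m) = T (act h (theta m))
}.

Definition proper_dil (M N : lmodType k) (act : H -> N -> N) (theta : M -> N) : Prop :=
  forall x : N, exists s : seq (H * M), x = \sum_(p <- s) act p.1 (theta p.2).

Record submodule (N : lmodType k) (act : H -> N -> N) (P : N -> Prop) : Prop := {
  sub0 : P 0;
  subD : forall x y, P x -> P y -> P (x + y);
  subZ : forall (c : k) x, P x -> P (c *: x);
  subH : forall (h : H) x, P x -> P (act h x)
}.

Definition minimal_dil (N : lmodType k) (act : H -> N -> N) (T : N -> N) : Prop :=
  forall P : N -> Prop, submodule act P -> (forall x, P x -> T x = 0) ->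
    forall x, P x -> x = 0.

(* Hom_k(H,M) is realized inside the functions H -> M,
   with (h |> f)(g) = f (g h).  phi(m)(h) = pi(h)(m), so
   (h |> phi(m))(g) = pi(g h)(m), and Mbar = H |> phi(M) consists of the
   finite sums of such functions. *)
Definition phi_std (M : lmodType k) (pi : H -> M -> M) (m : M) : H -> M :=
  fun h => pi h m.

Definition in_Mbar (M : lmodType k) (pi : H -> M -> M) (f : H -> M) : Prop :=
  exists s : seq (H * M), forall g : H, f g = \sum_(p <- s) pi (g * p.1) p.2.

Definition T_std (M : lmodType k) (pi : H -> M -> M) (f : H -> M) : H -> M :=
  phi_std pi (f 1).

Record std_map (M : lmodType k) (pi : H -> M -> M)
    (N : lmodType k) (act : H -> N -> N) (T : N -> N) (theta : M -> N)
    (Phi : N -> H -> M) : Prop := {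
  Phi_in : forall x : N, in_Mbar pi (Phi x);
  Phi_lin : forall (c : k) (x y : N) (g : H),
    Phi (c *: x + y) g = c *: Phi x g + Phi y g;
  Phi_H : forall (h : H) (x : N) (g : H), Phi (act h x) g = Phi x (g * h);
  Phi_surj : forall f : H -> M, in_Mbar pi f ->
    exists x : N, forall g : H, Phi x g = f g;
  Phi_T : forall (x : N) (g : H), T_std pi (Phi x) g = Phi (T x) g;
  Phi_theta : forall (m : M) (g : H), Phi (theta m) g = phi_std pi m g
}.

Definition map_injective (M N : lmodType k) (Phi : N -> H -> M) : Prop :=
  forall x y : N, (forall g : H, Phi x g = Phi y g) -> x = y.

End Defs.

(* Main.v *)
Require Import Defs.
From mathcomp Require Import all_boot all_order all_algebra.
From Stdlib Require Import ClassicalEpsilon.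
Set Implicit Arguments. Unset Strict Implicit.
Import GRing.Theory.
Local Open Scope ring_scope.

Section Aux.
Variable k : fieldType.
Variables U V : lmodType k.
Implicit Types f : U -> V.

Lemma kl0 f : klinear f -> f 0 = 0.
Proof.
move=> hf; have := hf 1 0 0; rewrite !scale1r addr0.
by move=> E; rewrite -(addrK (f 0) (f 0)) -E subrr.
Qed.

Lemma klD f x y : klinear f -> f (x + y) = f x + f y.
Proof. by move=> hf; have := hf 1 x y; rewrite !scale1r. Qed.

Lemma klZ f c x : klinear f -> f (c *: x) = c *: f x.
Proof. by move=> hf; have := hf c x 0; rewrite (kl0 hf) !addr0. Qed.

Lemma klB f x y : klinear f -> f (x - y) = f x - f y.
Proof.
move=> hf; rewrite klD // -scaleN1r klZ //; by rewrite scaleN1r.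
Qed.

Lemma klsum f (I : Type) (s : seq I) (F : I -> U) : klinear f ->
  f (\sum_(i <- s) F i) = \sum_(i <- s) f (F i).
Proof.
move=> hf; elim: s => [|a s IH]; first by rewrite !big_nil kl0.
by rewrite !big_cons klD // IH.
Qed.
End Aux.

Theorem mainTheorem10 (k : fieldType) (H : algType k) (HH : hopf H)
  (M : lmodType k) (pi : H -> M -> M) (Hpi : partial_module HH pi)
  (N : lmodType k) (act : H -> N -> N) (T : N -> N) (theta : M -> N)
  (Hdil : dilation HH pi act T theta) (Hprop : proper_dil act theta) :
  exists Phi : N -> H -> M,
    [/\ std_map pi act T theta Phi,
        (forall Phi' : N -> H -> M, std_map pi act T theta Phi' ->
           forall (x : N) (g : H), Phi' x g = Phi x g) &
        (map_injective Phi <-> minimal_dil act T)].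
Proof.
case: Hdil => Hmod Tlin Tproj _ thlin thinj thin thonto thmor.
case: Hmod => _ actlin act1 actM.
have ex y : {m | theta m = T y}.
  by apply: constructive_indefinite_description; apply: thonto.
pose tinv y := sval (ex y).
have tinvE y : theta (tinv y) = T y by rewrite /tinv; case: (ex y).
have tinvlin : klinear tinv.
  move=> c x y; apply: thinj; rewrite tinvE Tlin thlin !tinvE //.
have tinvth h m : tinv (act h (theta m)) = pi h m.
  by apply: thinj; rewrite tinvE thmor.
pose Phi x g := tinv (act g x).
have Philin g : klinear (fun x => Phi x g).
  by move=> c x y; rewrite /Phi actlin tinvlin.
have Phisum g (s : seq (H * M)) :
    Phi (\sum_(p <- s) act p.1 (theta p.2)) g = \sum_(p <- s) pi (g * p.1) p.2.
  rewrite (klsum _ _ (Philin g)); apply: eq_bigr => p _.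
  by rewrite /Phi -actM tinvth.
have Hstd : std_map pi act T theta Phi.
  split.
  - move=> x; have [s ->] := Hprop x; exists s => g; exact: Phisum.
  - by move=> c x y g; apply: Philin.
  - by move=> h x g; rewrite /Phi actM.
  - move=> f [s Hs]; exists (\sum_(p <- s) act p.1 (theta p.2)) => g.
    by rewrite Phisum Hs.
  - move=> x g; rewrite /T_std /phi_std /Phi act1.
    by rewrite -tinvth tinvE.
  - by move=> m g; rewrite /Phi tinvth.
exists Phi; split => //.
- move=> Phi' HP x g; have [s ->] := Hprop x.
  rewrite Phisum (klsum _ _ (fun c x y => Phi_lin HP c x y g)).
  apply: eq_bigr => p _; by rewrite (Phi_H HP) (Phi_theta HP).
- split.
  + move=> Hinj P HP PT x Px; apply: (Hinj x 0) => g.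
    rewrite /Phi (kl0 (actlin g)); apply: thinj; rewrite !tinvE.
    rewrite (kl0 Tlin) PT //; exact: (subH HP).
  + move=> Hmin x y Hxy; apply/eqP; rewrite -subr_eq0; apply/eqP.
    apply: (Hmin (fun z => forall g, T (act g z) = 0)).
    * split.
      - by move=> g; rewrite (kl0 (actlin g)) (kl0 Tlin).
      - by move=> a b Ha Hb g; rewrite (klD _ _ (actlin g)) (klD _ _ Tlin) Ha Hb addr0.
      - by move=> c a Ha g; rewrite (klZ _ _ (actlin g)) (klZ _ _ Tlin) Ha scaler0.
      - by move=> h a Ha g; rewrite -actM Ha.
    * by move=> z Hz; rewrite -(act1 z) Hz.
    * move=> g; rewrite (klB _ _ (actlin g)) (klB _ _ Tlin) -!tinvE.
      by have := Hxy g; rewrite /Phi => ->; rewrite subrr.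
Qed.
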